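(* Let $k\in\mathbb{Z}_+$ and let $A$ be the matrix defined below. Then $A^{\lfloor k/2\rfloor+1}=0$. Consequently, if $M:[0,\infty)\to\mathbb{R}^{\binom{k+d}{d}}$ satisfies $\frac{dM}{dt}=AM$ on $(0,\infty)$ and $M(0)=\lim_{t\to0^+}M(t)$, then for every $t\ge0$, $$\|M(0)\|_\infty\le\|M(t)\|_\infty\sum_{j=0}^{\lfloor k/2\rfloor}\frac{k^j(k-1)^j}{j!}\,t^j.$$
   Context: $A$ is the square matrix indexed by $\{\alpha\in\mathbb{Z}_+^d:\|\alpha\|_1\le k\}$ (where $\|\alpha\|_1=\sum_i\alpha_i$) with entries $A_{\alpha,\alpha'}=\alpha_i(\alpha_i-1)$ if $\alpha'=\alpha-2e_i$ for some $i\in\{1,\dots,d\}$ ($e_i$ the canonical basis vector of $\mathbb{Z}^d$), and $A_{\alpha,\alpha'}=0$ otherwise. $\|\cdot\|_\infty$ is the max-norm of vectors. *)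

(* Defs.v *)
From HB Require Import structures.
From mathcomp Require Import all_boot all_order all_algebra.
From mathcomp Require Import all_classical all_reals all_analysis.
Set Implicit Arguments. Unset Strict Implicit. Unset Printing Implicit Defensive.
Import Order.TTheory GRing.Theory Num.Theory.
Local Open Scope ring_scope.

Definition mindex (d k : nat) : Type :=
  {a : {ffun 'I_d -> 'I_k.+1} | (\sum_(i < d) (a i : nat) <= k)%N}.

Definition mi {d k : nat} (a : mindex d k) (i : 'I_d) : nat := val a i.

(* Entry A_{alpha,alpha'} : alpha_i (alpha_i - 1) if alpha' = alpha - 2 e_i for
   some i, and 0 otherwise.  At most one i can satisfy the condition, so the
   sum below has at most one nonzero term. *)
Definition Aentry (R : pzRingType) {d k : nat} (a a' : mindex d k) : R :=
  \sum_(i < d)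
    (if (mi a i == (mi a' i).+2) && [forall j, (j != i) ==> (mi a j == mi a' j)]
     then ((mi a i * (mi a i).-1)%N)%:R else 0).

Definition Amat (R : pzRingType) (d k : nat) : 'M[R]_(#|{: mindex d k}|) :=
  \matrix_(i, j) Aentry R (enum_val i) (enum_val j).

Definition supnorm (R : realDomainType) (n : nat) (v : 'cV[R]_n) : R :=
  \big[Num.max/0]_(i < n) `|v i ord0|.

(* Main.v *)
Require Import Defs.
From HB Require Import structures.
From mathcomp Require Import all_boot all_order all_algebra.
From mathcomp Require Import all_classical all_reals all_analysis.
From mathcomp Require Import zify ring.
Import Order.TTheory GRing.Theory Num.Theory.
Import numFieldNormedType.Exports.
Local Open Scope classical_set_scope.
Local Open Scope ring_scope.

Definition wt {d k : nat} (a : mindex d k) : nat := (\sum_(i < d) mi a i)%N.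

Lemma wt_le {d k} (a : mindex d k) : (wt a <= k)%N.
Proof. exact: (valP a). Qed.

Lemma Aentry_ne0 (R : realType) d k (a a' : mindex d k) :
  Aentry R a a' != 0 -> wt a = (wt a').+2.
Proof.
apply: contraNeq => hw; apply/eqP; apply: big1 => i _.
case: ifP => // /andP[/eqP h1 /forallP h2]; exfalso; move/negP: hw; apply; apply/eqP.
rewrite /wt (bigD1 i (F := fun j => mi a j)) //= (bigD1 i (F := fun j => mi a' j)) //= h1.
rewrite (eq_bigr (fun j => mi a' j)) //.
by move=> j ji; have /implyP/(_ ji)/eqP := h2 j.
Qed.

Lemma Aentry_ge0 (R : realType) d k (a a' : mindex d k) : 0 <= Aentry R a a'.
Proof. by apply: sumr_ge0 => i _; case: ifP. Qed.

Lemma Apow_entry (R : realType) d k m (i j : 'I_#|{: mindex d k}|) :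
  wt (enum_val i) != (wt (enum_val j) + 2 * m)%N -> (Amat R d k ^+ m) i j = 0.
Proof.
elim: m i j => [|m IH] i j.
  rewrite expr0 addn0 mxE => hne; case: eqP => // eij.
  by rewrite eij eqxx in hne.
move=> hne; rewrite exprS -mulmxE mxE; apply: big1 => l _.
have [->|hA] := eqVneq (Amat R d k i l) 0; first by rewrite mul0r.
rewrite IH ?mulr0 //; move: hA; rewrite mxE => /Aentry_ne0 hw.
apply: contra hne => /eqP h; apply/eqP; rewrite hw h; lia.
Qed.

Lemma Anilp (R : realType) d k : Amat R d k ^+ (k./2).+1 = 0.
Proof.
apply/matrixP => i j; rewrite [RHS]mxE; apply: Apow_entry.
have := wt_le (enum_val i); have := odd_double_half k; rewrite -muln2.
have := leq_b1 (odd k); lia.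
Qed.

Lemma mindex_uniq d k (a b c : mindex d k) (i : 'I_d) :
  (mi a i == (mi b i).+2) && [forall j, (j != i) ==> (mi a j == mi b j)] ->
  (mi a i == (mi c i).+2) && [forall j, (j != i) ==> (mi a j == mi c j)] ->
  b = c.
Proof.
move=> /andP[/eqP hb /forallP hb'] /andP[/eqP hc /forallP hc'].
apply: val_inj; apply/ffunP => j; apply: val_inj.
change (mi b j = mi c j).
have [->|ji] := eqVneq j i; first by move: hb; rewrite hc => -[].
have /implyP/(_ ji)/eqP e1 := hb' j; have /implyP/(_ ji)/eqP e2 := hc' j.
by rewrite -e1 -e2.
Qed.

Lemma Arow (R : realType) d k (a : mindex d k) :
  \sum_(b : mindex d k) Aentry R a b <= (k * k.-1)%N%:R.
Proof.
rewrite /Aentry exchange_big /=.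
apply: (@le_trans _ _ (\sum_(i < d) ((mi a i * (mi a i).-1)%N%:R : R))).
  apply: ler_sum => i _.
  have [b Hb|hn] := pickP (fun b : mindex d k =>
       (mi a i == (mi b i).+2) && [forall j, (j != i) ==> (mi a j == mi b j)]).
    rewrite (bigD1 b) //= Hb big1 ?addr0 // => c cb.
    case: ifP => // Hc; by rewrite (@mindex_uniq _ _ _ _ _ _ Hb Hc) eqxx in cb.
  by rewrite big1 // => c _; rewrite hn.
rewrite -natr_sum ler_nat.
apply: (@leq_trans (\sum_(i < d) mi a i * k.-1)%N).
  apply: leq_sum => i _; apply: leq_mul => //.
  have : (mi a i < k.+1)%N by rewrite /mi ltn_ord.
  lia.
rewrite -big_distrl /=; apply: leq_mul => //; exact: wt_le.
Qed.

Lemma Arow_ord (R : realType) d k (i : 'I_#|{: mindex d k}|) :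
  \sum_l `|Amat R d k i l| <= (k * k.-1)%N%:R.
Proof.
under eq_bigr do rewrite mxE ger0_norm ?Aentry_ge0 //.
rewrite -(big_enum_val (fun b => Aentry R (enum_val i) b)).
exact: Arow.
Qed.

Lemma Apow_row (R : realType) d k j (i : 'I_#|{: mindex d k}|) :
  \sum_l `|(Amat R d k ^+ j) i l| <= ((k * k.-1)%N%:R) ^+ j.
Proof.
elim: j i => [|j IH] i.
  rewrite expr0 (bigD1 i) //= big1 => [|l li]; last by rewrite mxE eq_sym (negbTE li) normr0.
  by rewrite mxE eqxx normr1 addr0.
rewrite exprS -mulmxE.
apply: (@le_trans _ _ (\sum_l \sum_m `|Amat R d k i m| * `|(Amat R d k ^+ j) m l|)).
  apply: ler_sum => l _; rewrite mxE; apply: (le_trans (ler_norm_sum _ _ _)).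
  by apply: ler_sum => m _; rewrite normrM.
rewrite exchange_big /=.
apply: (@le_trans _ _ (\sum_m `|Amat R d k i m| * ((k * k.-1)%N%:R) ^+ j)).
  apply: ler_sum => m _; rewrite -mulr_sumr; apply: ler_wpM2l => //; exact: IH.
rewrite -mulr_suml [X in _ <= X]exprS; apply: ler_wpM2r; [exact: exprn_ge0|exact: Arow_ord].
Qed.
Section D.
Variable R : realType.

Lemma dmul (f g : R -> R) (x df dg : R) : is_derive x 1 f df -> is_derive x 1 g dg ->
  is_derive x 1 (fun s => f s * g s) (f x * dg + g x * df).
Proof. move=> hf hg; exact: (is_deriveM hf hg). Qed.

Lemma dsum n (h : 'I_n -> R -> R) (x : R) (dh : 'I_n -> R) :
  (forall j, is_derive x 1 (h j) (dh j)) ->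
  is_derive x 1 (fun s => \sum_(j < n) h j s) (\sum_(j < n) dh j).
Proof. move=> H; rewrite -fct_sumE; exact: is_derive_sum. Qed.

Lemma dpow n (x : R) : is_derive x 1 (fun s : R => s ^+ n) (n%:R * x ^+ n.-1).
Proof.
have := @is_deriveX R R id n x 1 1 _.
move=> /(_ (is_derive_id _ _)) H.
have -> : (fun s : R => s ^+ n) = id ^+ n.
  by apply/funext => s; rewrite fctE.
apply: (is_derive_eq H).
by rewrite /GRing.scale /= mulr1.
Qed.

Lemma dcst (c x : R) : is_derive x 1 (fun _ : R => c) 0.
Proof. exact: is_derive_cst. Qed.

Lemma dcont (f : R -> R) (x df : R) : is_derive x 1 f df -> f @ x --> f x.
Proof.
move=> H; have := @ex_derive _ _ _ _ _ _ _ H.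
by move/derivable1_diffP/differentiable_continuous.
Qed.

Lemma cvg_sumf n (h : 'I_n -> R -> R) (a : 'I_n -> R) (F : set_system R) {PF : Filter F} :
  (forall j, h j @ F --> a j) -> (fun s => \sum_(j < n) h j s) @ F --> \sum_(j < n) a j.
Proof.
elim: n h a => [|n IH] h a H.
  rewrite big_ord0; under eq_fun do rewrite big_ord0; exact: cvg_cst.
rewrite big_ord_recr /=.
have -> : (fun s => \sum_(j < n.+1) h j s) =
   (fun s => \sum_(j < n) h (widen_ord (leqnSn n) j) s) + h ord_max.
  by apply/funext => s; rewrite big_ord_recr.
apply: cvgD; first exact: IH.
exact: H.
Qed.

End D.
Arguments dmul {R f g x df dg}. Arguments dsum {R n h x dh}. Arguments dpow {R}. Arguments dcst {R}. Arguments dcont {R f x df}. Arguments cvg_sumf {R n h a F PF}.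

Section K.
Variables (R : realType) (n : nat) (A : 'M[R]_n) (K : nat) (hA : A ^+ K.+1 = 0)
  (M : R -> 'cV[R]_n).
Hypothesis hd : forall t : R, 0 < t -> forall i,
        is_derive t 1 (fun s => M s i ord0) ((A *m M t) i ord0).
Hypothesis hc : forall i, (fun s => M s i ord0) @ at_right 0 --> M 0 i ord0.

Definition P j i s := (A ^+ j *m M s) i ord0.
Definition cc j (s : R) : R := ((-1) ^+ j / (j`!)%:R) * s ^+ j.
Definition G i s := \sum_(j < K.+1) cc j s * P j i s.

Lemma dP j (i : 'I_n) (s : R) : 0 < s -> is_derive s 1 (P j i) (P j.+1 i s).
Proof.
move=> hs.
have -> : P j i = fun s => \sum_l (A^+j) i l * M s l ord0.
  by apply/funext => u; rewrite /P mxE.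
have H := dsum (fun l => dmul (dcst ((A^+j) i l) s) (hd s hs l)).
apply: (is_derive_eq H).
rewrite /P exprSr -mulmxA mxE; apply: eq_bigr => l _ /=.
by rewrite mulr0 addr0.
Qed.

Lemma dcc j (s : R) : is_derive s 1 (cc j)
   (((-1) ^+ j / (j`!)%:R) * (j%:R * s ^+ j.-1)).
Proof.
apply: (is_derive_eq (dmul (dcst ((-1) ^+ j / (j`!)%:R) s) (dpow j s))).
by rewrite mulr0 addr0.
Qed.

Lemma dG i (s : R) : 0 < s -> is_derive s 1 (G i) 0.
Proof.
move=> hs.
apply: (is_derive_eq (dsum (fun j => dmul (dcc j s) (dP j i s hs)))).
rewrite big_split /= big_ord_recr /= [X in _ + X]big_ord_recl /=.
rewrite {2}/P hA mul0mx mxE mulr0 addr0.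
rewrite !(mul0r, mulr0) add0r -big_split /=.
apply: big1 => j _.
rewrite /bump /= add1n add0n.
have h1 : (j`!%:R : R) != 0 by rewrite pnatr_eq0 -lt0n fact_gt0.
have h2 : (j.+1%:R : R) != 0 by rewrite pnatr_eq0.
rewrite /cc factS natrM exprS.
field.
by rewrite h1 /= addrC natr1 h2.
Qed.

Lemma G0 i : G i 0 = M 0 i ord0.
Proof.
rewrite /G big_ord_recl big1 => [|j _]; rewrite /cc.
  by rewrite !expr0 /P expr0 mul1mx divr1 !mul1r addr0.
by rewrite expr0n /= mulr0 mul0r.
Qed.

Lemma Gright i : G i @ at_right 0 --> G i 0.
Proof.
apply: cvg_sumf => j.
apply: cvgM.
  exact: cvg_at_right_filter (dcont (dcc j 0)).
have -> : P j i = fun s => \sum_l (A^+j) i l * M s l ord0.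
  by apply/funext => u; rewrite /P mxE.
apply: cvg_sumf => l.
apply: cvgMl_tmp; exact: hc.
Qed.

Lemma keyG i (t : R) : 0 <= t -> M 0 i ord0 = G i t.
Proof.
rewrite le_eqVlt => /orP[/eqP <-|ht]; first by rewrite G0.
have cont : {within `[0, t], continuous (G i)}.
  apply/continuous_within_itvP => //; split.
  - move=> x; rewrite in_itv /= => /andP[hx _].
    exact: dcont (dG i x hx).
  - exact: Gright.
  - apply: cvg_at_left_filter; exact: dcont (dG i t ht).
have dGin : forall x, x \in `]0, t[ -> is_derive x 1 (G i) ((fun _ => 0) x).
  move=> x; rewrite in_itv /= => /andP[hx _]; exact: dG.
have [c hc' E] := MVT ht dGin cont.
by move: E; rewrite mul0r G0 => /eqP; rewrite subr_eq0 => /eqP.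
Qed.

End K.

Lemma supnorm_ge (R : realType) n (v : 'cV[R]_n) l : `|v l ord0| <= supnorm v.
Proof. by rewrite /supnorm (bigD1 l) //= le_max lexx. Qed.

Lemma supnorm_ge0 (R : realType) n (v : 'cV[R]_n) : 0 <= supnorm v.
Proof.
rewrite /supnorm; apply: (big_ind (fun x => 0 <= x)) => //.
by move=> x y hx hy; rewrite le_max hx.
Qed.

Theorem mainTheorem4 (R : realType) (d k : nat) :
  Amat R d k ^+ (k./2).+1 = 0 /\
  (forall M : R -> 'cV[R]_(#|{: mindex d k}|),
     (forall t : R, 0 < t -> forall i,
        is_derive t 1 (fun s => M s i ord0) ((Amat R d k *m M t) i ord0)) ->
     (forall i, (fun s => M s i ord0) @ at_right 0 --> M 0 i ord0) ->
     forall t : R, 0 <= t ->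
       supnorm (M 0) <=
       supnorm (M t) * \sum_(j < (k./2).+1)
           ((k ^ j * k.-1 ^ j)%N%:R / (j`!)%:R * t ^+ j)).
Proof.
split; first exact: Anilp.
move=> M hd hc t ht.
have E i := @keyG R _ (Amat R d k) (k./2) (Anilp R d k) M hd hc i t ht.
have X0 : 0 <= supnorm (M t) * \sum_(j < (k./2).+1)
           ((k ^ j * k.-1 ^ j)%N%:R / (j`!)%:R * t ^+ j).
  apply: mulr_ge0; first exact: supnorm_ge0.
  apply: sumr_ge0 => j _; apply: mulr_ge0; last exact: exprn_ge0.
  by apply: divr_ge0.
rewrite {1}/supnorm; apply: (big_ind (fun x => x <= _)) => //.
  by move=> x y hx hy; rewrite ge_max hx hy.
move=> i _; rewrite E /G mulr_sumr.
apply: (le_trans (ler_norm_sum _ _ _)); apply: ler_sum => j _.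
rewrite normrM /cc normrM normrX (ger0_norm ht).
rewrite normrM normrX normrN1 expr1n mul1r ger0_norm ?invr_ge0 //.
have hP : `|P R _ (Amat R d k) M j i t| <= ((k * k.-1)%N%:R) ^+ j * supnorm (M t).
  rewrite /P mxE; apply: (le_trans (ler_norm_sum _ _ _)).
  apply: (@le_trans _ _ (\sum_l `|(Amat R d k ^+ j) i l| * supnorm (M t))).
    apply: ler_sum => l _; rewrite normrM; apply: ler_wpM2l => //.
    exact: supnorm_ge.
  rewrite -mulr_suml; apply: ler_wpM2r; [exact: supnorm_ge0|exact: Apow_row].
rewrite -natrX expnMn in hP.
apply: (le_trans (ler_wpM2l _ hP)).
  by apply: mulr_ge0; [rewrite invr_ge0|exact: exprn_ge0].
by rewrite le_eqVlt; apply/orP; left; apply/eqP; ring.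
Qed.
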